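(* Let $\mathsf{SRng}$ be the category of semirings and semiring homomorphisms, and let $S$ be the class of Schreier split epimorphisms in $\mathsf{SRng}$. If $h\colon E\to B$ is a surjective semiring homomorphism, then the change-of-base functor $h^*\colon SPt_B(\mathsf{SRng})\to SPt_E(\mathsf{SRng})$ has a right adjoint.
   Context: A semiring here is a set with a commutative monoid structure $(+,0)$ and an associative (not necessarily unital) multiplication distributing over $+$ on both sides, with $0x=x0=0$. A point in a category is a split epimorphism $f\colon A\to B$ with chosen section $s$ ($fs=1_B$); $Pt_B$ is the category of points over $B$ with morphisms commuting with $f$ and $s$ and identity on $B$; for $h\colon E\to B$, $h^*$ pulls points back along $h$. A split epimorphism $(A,B,f,s)$ of semirings is a Schreier split epimorphism if for every $a\in A$ there is a unique $\alpha\in\mathrm{Ker}(f)=f^{-1}(0)$ with $a=\alpha+sf(a)$. This class $S$ is pullback-stable, and $SPt_B(\mathsf{SRng})$ is the full subcategory of $Pt_B(\mathsf{SRng})$ of points in $S$. *)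

(* Defs.v *)
From Stdlib Require Import ProofIrrelevance.
Set Implicit Arguments.

(* A (not necessarily unital) semiring: commutative monoid (+,0),
   associative multiplication distributing on both sides, 0 absorbing. *)
Record SRng := {
  car :> Type;
  sadd : car -> car -> car;
  szero : car;
  smul : car -> car -> car;
  addA : forall x y z, sadd x (sadd y z) = sadd (sadd x y) z;
  addC : forall x y, sadd x y = sadd y x;
  add0l : forall x, sadd szero x = x;
  mulA : forall x y z, smul x (smul y z) = smul (smul x y) z;
  mulDl : forall x y z, smul (sadd x y) z = sadd (smul x z) (smul y z);
  mulDr : forall x y z, smul x (sadd y z) = sadd (smul x y) (smul x z);
  mul0l : forall x, smul szero x = szero;
  mul0r : forall x, smul x szero = szero }.

Arguments sadd {s}. Arguments szero {s}. Arguments smul {s}.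

Record SHom (A B : SRng) := {
  hfun :> A -> B;
  hadd : forall x y, hfun (sadd x y) = sadd (hfun x) (hfun y);
  hzero : hfun szero = szero;
  hmul : forall x y, hfun (smul x y) = smul (hfun x) (hfun y) }.

Definition surjective (A B : SRng) (h : SHom A B) : Prop :=
  forall b : B, exists a : A, h a = b.

Record Point (B : SRng) := {
  pcar : SRng;
  pf : SHom pcar B;
  ps : SHom B pcar;
  psec : forall b, pf (ps b) = b }.

Definition Schreier (B : SRng) (P : Point B) : Prop :=
  forall a : pcar P, exists! al : pcar P,
    pf P al = szero /\ a = sadd al (ps P (pf P a)).

Record PtMor (B : SRng) (P Q : Point B) := {
  mfun :> SHom (pcar P) (pcar Q);
  mf : forall a, pf Q (mfun a) = pf P a;
  ms : forall b, mfun (ps P b) = ps Q b }.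

Section Pullback.
Variables (E B : SRng) (h : SHom E B) (P : Point B).

Definition pbT := { p : pcar P * E | pf P (fst p) = h (snd p) }.

Lemma pb_eq (x y : pbT) : proj1_sig x = proj1_sig y -> x = y.
Proof.
destruct x as [x Hx], y as [y Hy]; simpl; intros ->.
f_equal; apply proof_irrelevance.
Qed.

Definition pb_add (x y : pbT) : pbT.
refine (exist _ (sadd (fst (proj1_sig x)) (fst (proj1_sig y)),
                 sadd (snd (proj1_sig x)) (snd (proj1_sig y))) _).
destruct x as [x Hx], y as [y Hy]; simpl.
rewrite hadd, hadd, Hx, Hy; reflexivity.
Defined.

Definition pb_zero : pbT.
refine (exist _ (szero, szero) _).
simpl; rewrite hzero, hzero; reflexivity.
Defined.

Definition pb_mul (x y : pbT) : pbT.
refine (exist _ (smul (fst (proj1_sig x)) (fst (proj1_sig y)),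
                 smul (snd (proj1_sig x)) (snd (proj1_sig y))) _).
destruct x as [x Hx], y as [y Hy]; simpl.
rewrite hmul, hmul, Hx, Hy; reflexivity.
Defined.

Ltac pbt := intros; repeat match goal with x : pbT |- _ => destruct x as [[? ?] ?] end; apply pb_eq; simpl; apply (f_equal2 pair).

Definition pbS : SRng.
refine (@Build_SRng pbT pb_add pb_zero pb_mul _ _ _ _ _ _ _ _);
  pbt; first [apply addA | apply addC | apply add0l | apply mulA
             | apply mulDl | apply mulDr | apply mul0l | apply mul0r].
Defined.

Definition pb_f : SHom pbS E.
refine (@Build_SHom pbS E (fun x : pbT => snd (proj1_sig x)) _ _ _);
  reflexivity.
Defined.

Definition pb_s_fun (e : E) : pbT.
refine (exist _ (ps P (h e), e) _).
simpl; apply psec.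
Defined.

Definition pb_s : SHom E pbS.
refine (@Build_SHom E pbS pb_s_fun _ _ _); intros; apply pb_eq; simpl;
  apply (f_equal2 pair); try reflexivity;
  first [rewrite hadd, hadd | rewrite hzero, hzero | rewrite hmul, hmul];
  reflexivity.
Defined.

Definition pb : Point E.
refine (@Build_Point E pbS pb_f pb_s _).
reflexivity.
Defined.

End Pullback.

Section PullbackMor.
Variables (E B : SRng) (h : SHom E B) (P P' : Point B) (g : PtMor P P').

Definition pb_mor_fun (x : pbT h P) : pbT h P'.
refine (exist _ (g (fst (proj1_sig x)), snd (proj1_sig x)) _).
destruct x as [x Hx]; simpl.
rewrite mf; exact Hx.
Defined.

Definition pb_hom : SHom (pbS h P) (pbS h P').
refine (@Build_SHom (pbS h P) (pbS h P') pb_mor_fun _ _ _);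
  intros; apply pb_eq; simpl; apply (f_equal2 pair); try reflexivity;
  first [apply hadd | apply hzero | apply hmul].
Defined.

Definition pb_mor : PtMor (pb h P) (pb h P').
refine (@Build_PtMor E (pb h P) (pb h P') pb_hom _ _).
- reflexivity.
- intros; apply pb_eq; simpl; apply (f_equal2 pair); [apply ms | reflexivity].
Defined.

End PullbackMor.

(* The functor h^* : SPt_B -> SPt_E has a right adjoint, expressed via the
   equivalent pointwise characterisation by universal arrows (couniversal
   arrows from h^* to each object Q of SPt_E; Mac Lane IV.1 Thm 2). *)
Definition SPt_pullback_has_right_adjoint (E B : SRng) (h : SHom E B) : Prop :=
  forall Q : Point E, Schreier Q ->
  exists (R : Point B) (eps : PtMor (pb h R) Q),
    Schreier R /\
    forall P : Point B, Schreier P ->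
    forall F : PtMor (pb h P) Q,
    exists g : PtMor P R,
      (forall x, eps (pb_mor h g x) = F x) /\
      (forall g' : PtMor P R,
         (forall x, eps (pb_mor h g' x) = F x) -> forall a, g' a = g a).

(* Main.v *)
Require Import Defs.
From Stdlib Require Import IndefiniteDescription ProofIrrelevance.
Set Implicit Arguments.

Lemma add4 (S : SRng) (a b c d : S) :
  sadd (sadd a b) (sadd c d) = sadd (sadd a c) (sadd b d).
Proof.
rewrite !addA; f_equal; rewrite <- !addA; f_equal; apply addC.
Qed.

Lemma add0r (S : SRng) (a : S) : sadd a szero = a.
Proof. rewrite addC; apply add0l. Qed.

Lemma expand (S : SRng) (a b c d : S) :
  smul (sadd a c) (sadd b d) = sadd (sadd (sadd (smul a b) (smul a d)) (smul c b)) (smul c d).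
Proof. rewrite mulDl, !mulDr, addA; reflexivity. Qed.

Section Kern.
Variables (X : SRng) (Y : Point X) (HY : Schreier Y).
Definition kk (a : pcar Y) : pcar Y :=
  proj1_sig (constructive_indefinite_description _ (HY a)).
Lemma kk_spec a : pf Y (kk a) = szero /\ a = sadd (kk a) (ps Y (pf Y a)).
Proof. unfold kk; destruct (constructive_indefinite_description _ (HY a)) as [x [Hx Hu]]; exact Hx. Qed.
Lemma kk_uniq a g : pf Y g = szero -> a = sadd g (ps Y (pf Y a)) -> g = kk a.
Proof. unfold kk; destruct (constructive_indefinite_description _ (HY a)) as [x [Hx Hu]]; simpl.
intros; symmetry; apply Hu; auto. Qed.
Lemma kk_p a : pf Y (kk a) = szero. Proof. apply kk_spec. Qed.
Lemma kk_dec a : a = sadd (kk a) (ps Y (pf Y a)). Proof. apply kk_spec. Qed.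
Lemma kk_char g e : pf Y g = szero -> kk (sadd g (ps Y e)) = g.
Proof. intros H; symmetry; apply kk_uniq; auto.
rewrite (hadd (pf Y)), H, psec, add0l; reflexivity. Qed.
End Kern.

Section Main.
Variables (E B : SRng) (h : SHom E B) (hs : surjective h) (Q : Point E) (HQ : Schreier Q).
Local Notation D := (pcar Q).
Local Notation p := (pf Q).
Local Notation t := (ps Q).
Local Notation kern := (kk HQ).

Definition sg (b : B) : E := proj1_sig (constructive_indefinite_description _ (hs b)).
Lemma sg_spec b : h (sg b) = b.
Proof. unfold sg; destruct (constructive_indefinite_description _ (hs b)); auto. Qed.

Lemma kern_t e : kern (t e) = szero.
Proof. pose proof (kk_char HQ szero e (hzero p)) as K. rewrite add0l in K. exact K. Qed.
Lemma kern_k a : p a = szero -> kern a = a.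
Proof. intro H. pose proof (kk_char HQ a szero H) as K. rewrite (hzero t), add0r in K. exact K. Qed.
Lemma kern_0 : kern szero = szero.
Proof. apply kern_k, hzero. Qed.
Lemma kern_add x y : kern (sadd x y) = sadd (kern x) (kern y).
Proof.
assert (Hp : p (sadd (kern x) (kern y)) = szero)
  by (rewrite (hadd p), !(kk_p HQ), add0l; reflexivity).
pose proof (kk_char HQ _ (sadd (p x) (p y)) Hp) as K.
rewrite (hadd t), add4, <- !(kk_dec HQ) in K. exact K.
Qed.
Lemma kern_mul x y : kern (smul x y) =
  sadd (sadd (smul (kern x) (kern y)) (smul (kern x) (t (p y)))) (smul (t (p x)) (kern y)).
Proof.
assert (Hp : p (sadd (sadd (smul (kern x) (kern y)) (smul (kern x) (t (p y)))) (smul (t (p x)) (kern y))) = szero)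
  by (rewrite !(hadd p), !(hmul p), !(kk_p HQ), ?mul0l, ?mul0r, ?add0l; reflexivity).
pose proof (kk_char HQ _ (smul (p x) (p y)) Hp) as K.
rewrite (hmul t), <- expand, <- !(kk_dec HQ) in K. exact K.
Qed.
Lemma kern_char a e : p a = szero -> kern (sadd a (t e)) = a.
Proof. apply kk_char. Qed.

Definition C (a : D) : Prop := forall e e', h e = h e' ->
  smul (t e) a = smul (t e') a /\ smul a (t e) = smul a (t e').
Definition G (d : D) := C (kern d).

Lemma C0 : C szero.
Proof. intros e e' _; rewrite !mul0r, !mul0l; auto. Qed.
Lemma C_add a b : C a -> C b -> C (sadd a b).
Proof. intros Ha Hb e e' He; destruct (Ha _ _ He), (Hb _ _ He).
rewrite !mulDr, !mulDl; split; congruence. Qed.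
Lemma G_add x y : G x -> G y -> G (sadd x y).
Proof. unfold G; rewrite kern_add; apply C_add. Qed.
Lemma G_mul x y : G x -> G y -> G (smul x y).
Proof. unfold G; intros Hx Hy; rewrite kern_mul.
repeat apply C_add.
- intros e e' He; destruct (Hx _ _ He) as [A1 _], (Hy _ _ He) as [_ A2].
  rewrite !mulA, A1, <- !mulA, A2; auto.
- intros e e' He; destruct (Hx _ _ He) as [A1 _].
  assert (He2 : h (smul (p y) e) = h (smul (p y) e')) by (rewrite !(hmul h), He; auto).
  destruct (Hx _ _ He2) as [_ A2].
  rewrite !mulA, A1, <- !mulA, <- !(hmul t), A2; auto.
- intros e e' He; destruct (Hy _ _ He) as [_ A1].
  assert (He2 : h (smul e (p x)) = h (smul e' (p x))) by (rewrite !(hmul h), He; auto).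
  destruct (Hy _ _ He2) as [A2 _].
  rewrite !mulA, <- !(hmul t), A2, <- !mulA, A1; auto.
Qed.
Lemma G_t e : G (t e).
Proof. unfold G; rewrite kern_t; apply C0. Qed.
Lemma G_0 : G szero.
Proof. unfold G; rewrite kern_0; apply C0. Qed.

Definition n (d : D) : D := sadd (kern d) (t (sg (h (p d)))).
Lemma p_n d : p (n d) = sg (h (p d)).
Proof. unfold n; rewrite (hadd p), (kk_p HQ), add0l, psec; auto. Qed.
Lemma hp_n d : h (p (n d)) = h (p d).
Proof. rewrite p_n, sg_spec; auto. Qed.
Lemma kern_n d : kern (n d) = kern d.
Proof. apply kern_char, kk_p. Qed.
Lemma ndet x y : kern x = kern y -> h (p x) = h (p y) -> n x = n y.
Proof. unfold n; intros -> ->; auto. Qed.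
Lemma nn d : n (n d) = n d.
Proof. apply ndet; [apply kern_n | apply hp_n]. Qed.
Lemma G_n d : G d -> G (n d).
Proof. unfold G; rewrite kern_n; auto. Qed.
Lemma n_addl x y : n (sadd (n x) y) = n (sadd x y).
Proof. apply ndet; [rewrite !kern_add, kern_n | rewrite !(hadd p), !(hadd h), hp_n]; auto. Qed.
Lemma n_addr x y : n (sadd x (n y)) = n (sadd x y).
Proof. apply ndet; [rewrite !kern_add, kern_n | rewrite !(hadd p), !(hadd h), hp_n]; auto. Qed.
Lemma n_mull x y : G y -> n (smul (n x) y) = n (smul x y).
Proof. intros Gy; apply ndet.
- rewrite !kern_mul, kern_n, p_n. f_equal. apply (Gy _ _ (sg_spec _)).
- rewrite !(hmul p), !(hmul h), p_n, sg_spec; auto.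
Qed.
Lemma n_mulr x y : G x -> n (smul x (n y)) = n (smul x y).
Proof. intros Gx; apply ndet.
- rewrite !kern_mul, kern_n, p_n. f_equal. f_equal. apply (Gx _ _ (sg_spec _)).
- rewrite !(hmul p), !(hmul h), p_n, sg_spec; auto.
Qed.
Lemma n_mul x y : G x -> G y -> n (smul (n x) (n y)) = n (smul x y).
Proof. intros; rewrite n_mull, n_mulr; auto using G_n. Qed.

Definition Rt := { d : D | G d /\ n d = d }.
Lemma Req (x y : Rt) : proj1_sig x = proj1_sig y -> x = y.
Proof. destruct x as [x Hx], y as [y Hy]; simpl; intros ->; f_equal; apply proof_irrelevance. Qed.
Lemma RG (x : Rt) : G (proj1_sig x). Proof. exact (proj1 (proj2_sig x)). Qed.
Lemma Rn (x : Rt) : n (proj1_sig x) = proj1_sig x. Proof. exact (proj2 (proj2_sig x)). Qed.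

Definition mkR (d : D) (Hd : G d) : Rt := exist _ (n d) (conj (G_n Hd) (nn d)).
Definition radd (x y : Rt) : Rt := mkR (G_add (RG x) (RG y)).
Definition rmul (x y : Rt) : Rt := mkR (G_mul (RG x) (RG y)).
Definition rzero : Rt := mkR G_0.

Definition Rs : SRng.
refine (@Build_SRng Rt radd rzero rmul _ _ _ _ _ _ _ _); intros; apply Req; simpl.
- rewrite n_addl, n_addr, addA; auto.
- rewrite addC; auto.
- rewrite n_addl, add0l, Rn; auto.
- rewrite n_mull, n_mulr, mulA; auto using RG, G_mul.
- rewrite n_mull, mulDl, n_addl, n_addr; auto using RG.
- rewrite n_mulr, mulDr, n_addl, n_addr; auto using RG.
- rewrite n_mull, mul0l; auto using RG.
- rewrite n_mulr, mul0r; auto using RG.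
Defined.

Definition fR : SHom Rs B.
refine (@Build_SHom Rs B (fun x : Rt => h (p (proj1_sig x))) _ _ _); intros; simpl.
- rewrite hp_n, (hadd p), (hadd h); auto.
- rewrite hp_n, (hzero p), (hzero h); auto.
- rewrite hp_n, (hmul p), (hmul h); auto.
Defined.

Definition sR_fun (b : B) : Rt := mkR (G_t (sg b)).

Definition sR : SHom B Rs.
refine (@Build_SHom B Rs sR_fun _ _ _); intros; apply Req; simpl.
- rewrite n_addl, n_addr; apply ndet.
  + rewrite kern_add, !kern_t, add0l; auto.
  + rewrite (hadd p), !psec, (hadd h), !sg_spec; auto.
- apply ndet.
  + rewrite kern_t, kern_0; auto.
  + rewrite psec, sg_spec, (hzero p), (hzero h); auto.
- rewrite n_mul by apply G_t. apply ndet.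
  + rewrite <- (hmul t), !kern_t; auto.
  + rewrite <- (hmul t), !psec, (hmul h), !sg_spec; auto.
Defined.

Definition Rpt : Point B.
refine (@Build_Point B Rs fR sR _).
intros b; simpl. rewrite hp_n, psec, sg_spec; auto.
Defined.

Lemma G_k d : G d -> G (kern d).
Proof. unfold G; rewrite (@kern_k (kern d)); [auto | apply kk_p]. Qed.

Lemma SchR : Schreier Rpt.
Proof.
intros a. simpl in a |- *.
exists (mkR (G_k (RG a)) ). split.
- split.
  + simpl. rewrite hp_n, (kk_p HQ), (hzero h); auto.
  + apply Req; simpl. rewrite n_addl, n_addr, <- (Rn a) at 1. apply ndet.
    * symmetry; apply kern_char, kk_p.
    * rewrite (hadd p), (hadd h), psec, sg_spec, (kk_p HQ), (hzero h), add0l; auto.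
- intros al [H1 H2]. apply Req; simpl. rewrite <- (Rn al) at 1. apply ndet.
  + rewrite (@kern_k (kern (proj1_sig a)) (kk_p HQ _)). rewrite H2 at 1. simpl.
    rewrite kern_n, kern_add, kern_n, kern_t, add0r; auto.
  + simpl in H1. rewrite H1, (kk_p HQ), (hzero h); auto.
Qed.
Definition eps_fun (x : pbT h Rpt) : D :=
  sadd (kern (proj1_sig (fst (proj1_sig x)))) (t (snd (proj1_sig x))).

Definition eps_hom : SHom (pbS h Rpt) D.
refine (@Build_SHom (pbS h Rpt) D eps_fun _ _ _).
- intros [[x e] Hx] [[y e'] Hy]; unfold eps_fun; simpl.
  rewrite kern_n, kern_add, (hadd t), add4; auto.
- unfold eps_fun; simpl. rewrite kern_n, kern_0, (hzero t), add0l; auto.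
- intros [[x e] Hx] [[y e'] Hy]; unfold eps_fun; simpl in *.
  rewrite kern_n, kern_mul, expand, (hmul t).
  destruct (RG x _ _ Hy) as [_ A1]. destruct (RG y _ _ Hx) as [A2 _].
  rewrite A1, A2; auto.
Defined.

Definition eps : PtMor (pb h Rpt) Q.
refine (@Build_PtMor E (pb h Rpt) Q eps_hom _ _).
- intros x; simpl; unfold eps_fun. rewrite (hadd p), (kk_p HQ), add0l, psec; auto.
- intros e; simpl; unfold eps_fun; simpl. rewrite kern_n, kern_t, add0l; auto.
Defined.

Section Univ.
Variables (P : Point B) (HP : Schreier P) (F : PtMor (pb h P) Q).
Local Notation f := (pf P).
Local Notation s := (ps P).
Local Notation kP := (kk HP).

Definition mk (a : pcar P) (e : E) (H : f a = h e) : pbT h P := exist _ (a, e) H.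
Lemma kP0 a : f (kP a) = h szero.
Proof. rewrite (kk_p HP), (hzero h); auto. Qed.
Definition al a : D := F (mk (kP a) szero (kP0 a)).
Lemma p_al a : p (al a) = szero.
Proof. unfold al; rewrite (mf F); reflexivity. Qed.
Lemma F_dec (x : pbT h P) : F x = sadd (al (fst (proj1_sig x))) (t (snd (proj1_sig x))).
Proof.
destruct x as [[a e] H]; simpl in *.
transitivity (F (sadd (mk (kP a) szero (kP0 a) : pbS h P) (pb_s h P e))).
- f_equal; apply pb_eq; simpl. rewrite add0l, <- H, <- (kk_dec HP); reflexivity.
- rewrite (hadd (mfun F)); f_equal; apply (ms F).
Qed.
Lemma kern_F x : kern (F x) = al (fst (proj1_sig x)).
Proof. rewrite F_dec; apply kern_char, p_al. Qed.
Lemma C_al a : C (al a).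
Proof. intros e e' He. unfold al. rewrite <- !(ms F), <- !(hmul (mfun F)).
split; f_equal; apply pb_eq; simpl; rewrite He, ?mul0l, ?mul0r; reflexivity. Qed.
Lemma G_F x : G (F x).
Proof. unfold G; rewrite kern_F; apply C_al. Qed.
Lemma L (x y : pbT h P) : fst (proj1_sig x) = fst (proj1_sig y) ->
  h (snd (proj1_sig x)) = h (snd (proj1_sig y)) -> n (F x) = n (F y).
Proof. intros H1 H2; apply ndet.
- rewrite !kern_F, H1; auto.
- rewrite !(mf F); exact H2.
Qed.

Definition gf (a : pcar P) : Rt := mkR (G_F (mk a (sg (f a)) (eq_sym (sg_spec (f a))))).

Definition g_hom : SHom (pcar P) Rs.
refine (@Build_SHom (pcar P) Rs gf _ _ _); intros; apply Req; simpl.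
- rewrite n_addl, n_addr, <- (hadd (mfun F)); apply L; simpl; auto.
  rewrite (hadd h), !sg_spec, (hadd f); auto.
- rewrite <- (hzero (mfun F)); apply L; simpl; auto.
  rewrite sg_spec, (hzero f), (hzero h); auto.
- rewrite n_mul by apply G_F. rewrite <- (hmul (mfun F)); apply L; simpl; auto.
  rewrite (hmul h), !sg_spec, (hmul f); auto.
Defined.

Definition g : PtMor P Rpt.
refine (@Build_PtMor B P Rpt g_hom _ _).
- intros a; simpl. rewrite hp_n, (mf F); simpl. apply sg_spec.
- intros b; apply Req; simpl. rewrite <- (ms F (sg b)). apply L; simpl.
  + rewrite sg_spec; auto.
  + rewrite psec, !sg_spec; auto.
Defined.

Lemma g_tri : forall x, eps (pb_mor h g x) = F x.
Proof. intros [[a e] H]. simpl. unfold eps_fun; simpl.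
rewrite kern_n, kern_F, F_dec; simpl; reflexivity. Qed.

Lemma g_uniq : forall g' : PtMor P Rpt,
  (forall x, eps (pb_mor h g' x) = F x) -> forall a, g' a = g a.
Proof.
intros g' Hg' a. apply Req. simpl. transitivity (n (proj1_sig (g' a))); [symmetry; apply Rn|]. apply ndet.
- specialize (Hg' (mk a (sg (f a)) (eq_sym (sg_spec (f a))))).
  simpl in Hg'. unfold eps_fun in Hg'; simpl in Hg'.
  rewrite <- Hg', kern_char; auto using kk_p.
- pose proof (mf g' a) as M; simpl in M. etransitivity; [exact M|]. rewrite (mf F); simpl.
  symmetry; apply sg_spec.
Qed.
End Univ.
End Main.

Theorem mainTheorem3 (E B : SRng) (h : SHom E B) :
  surjective h -> SPt_pullback_has_right_adjoint h.
Proof.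
intros hs Q HQ.
exists (Rpt hs HQ), (eps hs HQ). split; [apply SchR |].
intros P HP F. exists (g hs HQ HP F). split.
- apply g_tri.
- apply g_uniq.
Qed.
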